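(* Let $T\in K\{X\}_\infty$ be a monomial. Then $$\Delta_a(T)=\sum_{I\subseteq\mathrm{Le}(T)}\mathrm{red}(T|I)\otimes\mathrm{red}(T|I^c),$$ where $I^c=\mathrm{Le}(T)\setminus I$. The same formula holds for the restriction of $\Delta_a$ to $K\{X\}$ and $T\in K\{X\}$ a monomial.
   Context: $K$ is a field of characteristic $0$ and $X=\{x_1,x_2,\dots\}$ a finite or countable set of variables. A planar rooted tree is reduced if no vertex has exactly one incoming edge. $K\{X\}_\infty$ has basis the monomials: the empty tree $1$ and all planar reduced rooted trees with leaves labelled by elements of $X$; for $k\ge2$, $\vee^k$ grafts $k$ nonempty trees (in order) onto a new root, extended multilinearly, with unit conventions (arguments $1$ omitted, $\vee^1=\mathrm{id}$, $\vee^k(1,\dots,1)=1$). $K\{X\}$ is the span of $1$ and the binary trees. $K\{X\}_\infty\otimes K\{X\}_\infty$ carries the operations componentwise ($\vee^k(a_1\otimes b_1,\dots,a_k\otimes b_k)=\vee^k(a_1,\dots,a_k)\otimes\vee^k(b_1,\dots,b_k)$), and $\Delta_a$ is the unique unital homomorphism for the $\vee^k$ with $\Delta_a(x_i)=x_i\otimes1+1\otimes x_i$. $\mathrm{Le}(T)$ is the set of leaves of $T$. For $I\subseteq\mathrm{Le}(T)$, the leaf-restriction $T|I$ is obtained from $T$ by deleting every vertex whose full subtree (the vertex and all its descendants) contains no leaf of $I$ (it is the empty tree $1$ if $I=\emptyset$); the reduction $\mathrm{red}(S)$ of a labelled tree $S$ is obtained by deleting all vertices with exactly one child, the remaining vertices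 keeping their labels and the descendant relation (so $v'$ is a descendant of $v$ in $\mathrm{red}(S)$ iff it is in $S$), and keeping the planar order. *)

(* Defs.v *)
From HB Require Import structures.
From mathcomp Require Import all_boot all_order all_algebra.
Set Implicit Arguments. Unset Strict Implicit. Unset Printing Implicit Defensive.
Import GRing.Theory.
Local Open Scope ring_scope.

Inductive ptree (X : Type) := Leaf of X | Node of seq (ptree X).
Arguments Leaf {X} _.
Arguments Node {X} _.

Section TreeCount.
Variable X : countType.
Fixpoint ptree_enc (t : ptree X) : GenTree.tree X :=
  match t with Leaf x => GenTree.Leaf x | Node l => GenTree.Node 0 (map ptree_enc l) end.
Fixpoint ptree_dec (g : GenTree.tree X) : ptree X :=
  match g with GenTree.Leaf x => Leaf x | GenTree.Node _ l => Node (map ptree_dec l) end.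
Fixpoint ptree_encK (t : ptree X) : ptree_dec (ptree_enc t) = t :=
  match t return ptree_dec (ptree_enc t) = t with
  | Leaf x => erefl
  | Node l => f_equal Node
      ((fix go (l : seq (ptree X)) : map ptree_dec (map ptree_enc l) = l :=
          match l return map ptree_dec (map ptree_enc l) = l with
          | [::] => erefl
          | a :: l' => f_equal2 cons (ptree_encK a) (go l')
          end) l)
  end.
End TreeCount.

HB.instance Definition _ (X : countType) :=
  Countable.copy (ptree X) (can_type (@ptree_encK X)).

Section Trees.
Variable X : countType.

(** A monomial of K{X}_oo is [None] (the empty tree 1) or [Some t]. *)
Definition mono := option (ptree X).

Fixpoint reduced (t : ptree X) : bool :=
  match t with Leaf _ => true | Node l => (2 <= size l)%N && all reduced l end.
(** binary trees (basis of K{X}) *)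
Fixpoint binary (t : ptree X) : bool :=
  match t with Leaf _ => true | Node l => (size l == 2)%N && all binary l end.

Definition mono_reduced (m : mono) : bool :=
  if m is Some t then reduced t else true.
Definition mono_binary (m : mono) : bool :=
  if m is Some t then binary t else true.

(** number of leaves; leaves are identified with 0 .. nleaves-1 in planar
    (left-to-right) order *)
Fixpoint nleaves (t : ptree X) : nat :=
  match t with Leaf _ => 1%N | Node l => sumn (map nleaves l) end.

(** leaf restriction T|I, I given as a bit mask on the leaves (in order). *)
Fixpoint restr (t : ptree X) (m : seq bool) : option (ptree X) :=
  match t with
  | Leaf x => if head false m then Some (Leaf x) else None
  | Node l =>
      let cs := pmap id
        ((fix go (ls : seq (ptree X)) (m : seq bool) : seq (option (ptree X)) :=
            match ls with
            | [::] => [::]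
            | c :: ls' => restr c (take (nleaves c) m) :: go ls' (drop (nleaves c) m)
            end) l m) in
      if cs is [::] then None else Some (Node cs)
  end.

Fixpoint red (t : ptree X) : ptree X :=
  match t with
  | Leaf x => Leaf x
  | Node [:: c] => red c
  | Node l => Node (map red l)
  end.

Definition leaf_restr (T : ptree X) (S : {set 'I_(nleaves T)}) : mono :=
  restr T [seq i \in S | i <- enum 'I_(nleaves T)].

Definition mono_red (m : mono) : mono := omap red m.

(** grafting operator vee^k on monomials, with the unit conventions:
    arguments 1 are omitted, vee^1 = id, vee^k(1,..,1) = 1. *)
Definition graft (ms : seq mono) : mono :=
  match pmap id ms with
  | [::] => None
  | [:: t] => Some t
  | ts => Some (Node ts)
  end.

Variable K : fieldType.

(** Elements of K{X}_oo (x) K{X}_oo, whose basis is the set of pairs of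
    monomials, are represented by formal finite sums (lists of
    coefficient/basis-element pairs); [coef2 v p] is the coefficient of p. *)
Definition tens := seq (K * (mono * mono)).
Definition coef2 (v : tens) (p : mono * mono) : K :=
  \sum_(c <- v | c.2 == p) c.1.
Definition teq (v w : tens) : Prop := forall p, coef2 v p = coef2 w p.

Fixpoint cprod (A : Type) (ls : seq (seq A)) : seq (seq A) :=
  match ls with
  | [::] => [:: [::]]
  | l :: ls' => [seq x :: r | x <- l, r <- cprod ls']
  end.

(** vee^k on the tensor square, componentwise on pure tensors of
    monomials and extended multilinearly. *)
Definition tvee (vs : seq tens) : tens :=
  [seq (\prod_(c <- cs) c.1,
        (graft [seq c.2.1 | c <- cs], graft [seq c.2.2 | c <- cs]))
  | cs <- cprod vs].

(** D (given on the monomial basis, extended linearly) is the coproduct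
    Delta_a: unital, a homomorphism for every vee^k (k >= 2), and
    D(x) = x (x) 1 + 1 (x) x on the variables. *)
Definition is_Delta_a (D : mono -> tens) : Prop :=
  [/\ teq (D None) [:: (1, (None, None))],
      (forall x : X, teq (D (Some (Leaf x)))
          [:: (1, (Some (Leaf x), None)); (1, (None, Some (Leaf x)))]) &
      (forall ms : seq mono, (2 <= size ms)%N -> all mono_reduced ms ->
          teq (D (graft ms)) (tvee (map D ms)))].

Definition Delta_formula (T : ptree X) : tens :=
  [seq (1, (mono_red (@leaf_restr T J), mono_red (@leaf_restr T (~: J))))
  | J <- enum {set 'I_(nleaves T)}].

End Trees.

(* Main.v *)
Require Import Defs.
From HB Require Import structures.
From mathcomp Require Import all_boot all_order all_algebra.
Set Implicit Arguments. Unset Strict Implicit. Unset Printing Implicit Defensive.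
Import GRing.Theory.
Local Open Scope ring_scope.

Section Coef.
Variable K : fieldType.

Definition coefA (A : eqType) (v : seq (K * A)) (p : A) : K :=
  \sum_(c <- v | c.2 == p) c.1.

Lemma sum_decomp (A : eqType) (v : seq (K * A)) (U : seq A) (P : pred A) :
  uniq U -> (forall c, c \in v -> c.2 \in U) ->
  \sum_(c <- v | P c.2) c.1 = \sum_(q <- U | P q) coefA v q.
Proof.
move=> uU hU.
rewrite /coefA.
under [RHS]eq_bigr do rewrite big_mkcond.
rewrite exchange_big /= [LHS]big_mkcond /=.
rewrite big_seq [RHS]big_seq; apply: eq_bigr => c /hU cU.
rewrite big_mkcond (bigD1_seq (c.2)) //= eqxx big1 ?addr0; first by case: (P c.2).
by move=> q /negbTE; rewrite eq_sym => ->; rewrite if_same.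
Qed.

Lemma coefA_map (A B : eqType) (g : A -> B) (v w : seq (K * A)) :
  (forall q, coefA v q = coefA w q) ->
  forall p, coefA [seq (c.1, g c.2) | c <- v] p = coefA [seq (c.1, g c.2) | c <- w] p.
Proof.
move=> h p; rewrite /coefA !big_map /=.
pose U := undup (map snd (v ++ w)).
have uU : uniq U by apply: undup_uniq.
rewrite (@sum_decomp _ v U (fun q => g q == p)) //; last first.
  by move=> c cv; rewrite mem_undup map_f // mem_cat cv.
rewrite (@sum_decomp _ w U (fun q => g q == p)) //; last first.
  by move=> c cv; rewrite mem_undup map_f // mem_cat cv orbT.
by apply: eq_bigr => q _; rewrite h.
Qed.

Definition prA (A : eqType) (v : seq (K * A)) (u : seq (K * seq A)) : seq (K * seq A) :=
  [seq (x.1 * y.1, x.2 :: y.2) | x <- v, y <- u].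

Lemma coef_pr (A : eqType) v u (a : A) l :
  coefA (prA v u) (a :: l) = coefA v a * coefA u l.
Proof.
rewrite /coefA /prA big_mkcond big_allpairs_dep /=.
rewrite (big_mkcond (fun c : K * A => c.2 == a)) mulr_suml; apply: eq_bigr => x _.
rewrite (big_mkcond (fun c : K * seq A => c.2 == l)) mulr_sumr; apply: eq_bigr => y _ /=.
rewrite eqseq_cons; case: (x.2 == a); case: (y.2 == l) => /=;
  by rewrite ?mulr0 ?mul0r.
Qed.

Lemma coef_pr_nil (A : eqType) v u : coefA (prA v u) ([::] : seq A) = 0.
Proof.
by rewrite /coefA /prA big_mkcond big_allpairs_dep /= big1 // => x _; rewrite big1.
Qed.

Lemma pr_compat (A : eqType) (v v' : seq (K * A)) u u' :
  (forall q, coefA v q = coefA v' q) -> (forall q, coefA u q = coefA u' q) ->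
  forall p, coefA (prA v u) p = coefA (prA v' u') p.
Proof.
by move=> h1 h2 [|a l]; rewrite ?coef_pr_nil ?coef_pr ?h1 ?h2.
Qed.
End Coef.


Fixpoint zipw (A B C : Type) (f : A -> B -> C) (xs : seq A) (ys : seq B) : seq C :=
  match xs, ys with
  | x :: xs', y :: ys' => f x y :: zipw f xs' ys'
  | _, _ => [::]
  end.

Fixpoint allm n : seq (seq bool) :=
  if n is n'.+1 then map (cons true) (allm n') ++ map (cons false) (allm n')
  else [:: [::]].

Lemma allm_add a b : allm (a + b) = [seq x ++ y | x <- allm a, y <- allm b].
Proof.
elim: a => [|a IH] /=.
  by rewrite cats0; elim: (allm b) => //= y l <-.
by rewrite IH allpairs_cat !allpairs_mapl !map_allpairs.
Qed.

Section Tr.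
Variable X : countType.

Definition gr' (ts : seq (ptree X)) : mono X :=
  match ts with [::] => None | [:: t] => Some t | t :: p :: l => Some (Node (t :: p :: l)) end.
Lemma graftE (ms : seq (mono X)) : graft ms = gr' (pmap id ms).
Proof. reflexivity. Qed.

Definition nl (m : mono X) : nat := if m is Some t then nleaves t else 0.
Definition rm (m : mono X) (b : seq bool) : mono X :=
  if m is Some t then restr t b else None.

Fixpoint go (ls : seq (ptree X)) (m : seq bool) : seq (option (ptree X)) :=
  match ls with
  | [::] => [::]
  | c :: ls' => restr c (take (nleaves c) m) :: go ls' (drop (nleaves c) m)
  end.

Lemma restr_node ts m : restr (Node ts) m =
  (let cs := pmap id (go ts m) in if cs is [::] then None else Some (Node cs)).
Proof. reflexivity. Qed.

Lemma go_flat ts bs : map size bs = map (@nleaves X) ts ->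
  go ts (flatten bs) = zipw (@restr X) ts bs.
Proof.
elim: ts bs => [|t ts IH] [|b bs] //= [hb hbs].
by rewrite take_size_cat // drop_size_cat // IH.
Qed.

Lemma pmap_omap (A B : Type) (f : A -> B) xs :
  pmap id (map (omap f) xs) = map f (pmap id xs).
Proof. by elim: xs => [|[x|] xs IH] //=; rewrite IH. Qed.

Lemma mred_node (cs : seq (ptree X)) :
  mono_red (if cs is [::] then None else Some (Node cs)) = gr' (map (@red X) cs).
Proof. by case: cs => [|c [|c' r]]. Qed.

Lemma graft_red (xs : seq (mono X)) :
  graft (map (@mono_red X) xs) = gr' (map (@red X) (pmap id xs)).
Proof. by rewrite graftE pmap_omap. Qed.

Fixpoint sel (ms : seq (mono X)) (bs : seq (seq bool)) : seq (seq bool) :=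
  match ms, bs with
  | Some _ :: ms', b :: bs' => b :: sel ms' bs'
  | None :: ms', _ :: bs' => sel ms' bs'
  | _, _ => [::]
  end.

Lemma sel_flat ms bs : map size bs = map nl ms -> flatten (sel ms bs) = flatten bs.
Proof.
elim: ms bs => [|[t|] ms IH] [|b bs] //= [hb hbs]; first by rewrite IH.
by case: b hb => //= _; rewrite IH.
Qed.

Lemma sel_size ms bs : map size bs = map nl ms ->
  map size (sel ms bs) = map (@nleaves X) (pmap id ms).
Proof.
by elim: ms bs => [|[t|] ms IH] [|b bs] //= [hb hbs]; rewrite IH // hb.
Qed.

Lemma sel_pmap ms bs : map size bs = map nl ms ->
  pmap id (zipw rm ms bs) = pmap id (zipw (@restr X) (pmap id ms) (sel ms bs)).
Proof.
elim: ms bs => [|[t|] ms IH] [|b bs] //= [hb hbs]; last by rewrite IH.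
by rewrite IH.
Qed.

Lemma map_zipw (A B C D : Type) (g : C -> D) (f : A -> B -> C) xs ys :
  map g (zipw f xs ys) = zipw (fun x y => g (f x y)) xs ys.
Proof. by elim: xs ys => [|x xs IH] [|y ys] //=; rewrite IH. Qed.

Lemma zipw_map (A B B' C : Type) (g : B' -> B) (f : A -> B -> C) xs ys :
  zipw f xs (map g ys) = zipw (fun x y => f x (g y)) xs ys.
Proof. by elim: xs ys => [|x xs IH] [|y ys] //=; rewrite IH. Qed.

Lemma core ms bs : map size bs = map nl ms ->
  mono_red (rm (graft ms) (flatten bs)) =
  graft (zipw (fun m b => mono_red (rm m b)) ms bs).
Proof.
move=> hs.
rewrite -(map_zipw (@mono_red X)) graft_red sel_pmap // graftE -(sel_flat hs).
have := sel_size hs.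
case: (pmap id ms) => [|t [|t' r]].
- by case: (sel ms bs).
- case: (sel ms bs) => [|b [|b' l]] //= [hb]; rewrite cats0.
  by case: (restr t b).
- move=> h.
  rewrite (_ : rm (gr' [:: t, t' & r]) _ = restr (Node [:: t, t' & r]) (flatten (sel ms bs))) //.
  by rewrite restr_node go_flat // mred_node.
Qed.
End Tr.


Lemma cprod_map (A B C : Type) (f : A -> B -> C) (L : A -> seq B) xs :
  cprod (map (fun x => map (f x) (L x)) xs) = map (zipw f xs) (cprod (map L xs)).
Proof.
elim: xs => [|x xs IH] //=.
by rewrite IH allpairs_mapl allpairs_mapr map_allpairs.
Qed.

Lemma allm_size n b : b \in allm n -> size b = n.
Proof.
elim: n b => [|n IH] b /=; first by rewrite inE => /eqP ->.
by rewrite mem_cat => /orP [] /mapP [r /IH <- ->].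
Qed.

Section Tr2.
Variable X : countType.
Variable K : fieldType.

Lemma sumn_nl (ms : seq (mono X)) : sumn (map (@nl X) ms) = sumn (map (@nleaves X) (pmap id ms)).
Proof. by elim: ms => [|[t|] ms IH] //=; rewrite IH. Qed.

Lemma nl_graft (ms : seq (mono X)) : nl (graft ms) = sumn (map (@nl X) ms).
Proof.
rewrite graftE sumn_nl; case: (pmap id ms) => [|t [|t' r]] //=.
by rewrite addn0.
Qed.

Lemma allm_cprod (ms : seq (mono X)) :
  allm (sumn (map (@nl X) ms)) = map flatten (cprod (map (fun m => allm (nl m)) ms)).
Proof.
elim: ms => [|m ms IH] //=.
by rewrite allm_add IH allpairs_mapr map_allpairs.
Qed.

Lemma mem_cprod_size (ms : seq (mono X)) bs :
  bs \in cprod (map (fun m => allm (nl m)) ms) -> map size bs = map (@nl X) ms.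
Proof.
elim: ms bs => [|m ms IH] bs /=; first by rewrite inE => /eqP ->.
by case/allpairsP => [[x r] /= [/allm_size hx /IH hr ->]] /=; rewrite hx hr.
Qed.

Definition hh (m : mono X) (b : seq bool) : K * (mono X * mono X) :=
  (1, (mono_red (rm m b), mono_red (rm m (map negb b)))).
Definition DF (m : mono X) : tens X K := map (hh m) (allm (nl m)).

Lemma prod1 ms bs : \prod_(c <- zipw hh ms bs) c.1 = 1.
Proof.
elim: ms bs => [|m ms IH] [|b bs] /=; rewrite ?big_nil // big_cons IH mulr1 //.
Qed.

Lemma DF_graft (ms : seq (mono X)) : DF (graft ms) = tvee (map DF ms).
Proof.
rewrite /DF nl_graft allm_cprod -map_comp /tvee.
rewrite (cprod_map hh (fun m => allm (nl m))) -map_comp.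
apply/eq_in_map => bs hbs /=.
have hs := mem_cprod_size hbs.
rewrite prod1 /hh !map_zipw /= core // map_flatten core; last first.
  by rewrite -map_comp -hs; apply: eq_map => b /=; rewrite size_map.
by rewrite zipw_map.
Qed.
End Tr2.


Section Tr3.
Variable X : countType.
Variable K : fieldType.

Definition tv (vs : seq (tens X K)) : seq (K * seq (mono X * mono X)) :=
  [seq (\prod_(c <- cs) c.1, map snd cs) | cs <- cprod vs].

Lemma tveeE vs : tvee vs =
  [seq (c.1, (graft (map fst c.2), graft (map snd c.2))) | c <- tv vs].
Proof.
rewrite /tvee /tv -map_comp; apply: eq_map => cs /=; by rewrite -!map_comp.
Qed.

Lemma tv_cons v vs : tv (v :: vs) = prA v (tv vs).
Proof.
by rewrite /tv /prA /= map_allpairs allpairs_mapr; apply: eq_allpairs => x y; rewrite big_cons.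
Qed.

Lemma teq_coef (v w : tens X K) : teq v w <-> (forall p, coefA v p = coefA w p).
Proof. by []. Qed.

Lemma tvee_coef vs ws : (forall q, coefA (tv vs) q = coefA (tv ws) q) -> teq (tvee vs) (tvee ws).
Proof.
move=> h p; rewrite !tveeE.
exact: (coefA_map (fun l : seq (mono X * mono X) => (graft (map fst l), graft (map snd l))) h p).
Qed.

Lemma tvee_compat (f g : mono X -> tens X K) ms :
  (forall m, m \in ms -> teq (f m) (g m)) -> teq (tvee (map f ms)) (tvee (map g ms)).
Proof.
move=> h; apply: tvee_coef.

elim: ms h => [|m ms IH] h p; first by [].
rewrite /= !tv_cons; apply: pr_compat.
  by apply/teq_coef/h; rewrite inE eqxx.
by apply: IH => m' hm'; apply: h; rewrite inE hm' orbT.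
Qed.

Definition mk n (J : {set 'I_n}) : seq bool := [seq i \in J | i <- enum 'I_n].

Lemma allm_mem n b : (b \in allm n) = (size b == n).
Proof.
have inj (t : bool) : injective (cons t) by move=> ? ? [].
elim: n b => [|n IH] b /=; first by rewrite inE; case: b.
case: b => [|x b] /=.
  by rewrite mem_cat; apply/negbTE/negP => /orP [] /mapP [].
rewrite eqSS -IH mem_cat; case: x.
  rewrite (mem_map (inj true)).
  have -> : (true :: b \in map (cons false) (allm n)) = false by apply/mapP => [[? _ []]].
  by rewrite orbF.
rewrite (mem_map (inj false)).
by have -> : (false :: b \in map (cons true) (allm n)) = false by apply/mapP => [[? _ []]].
Qed.

Lemma allm_uniq n : uniq (allm n).
Proof.
elim: n => [|n IH] //=; rewrite cat_uniq !map_inj_uniq // ?IH; try by move=> ? ? [].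
rewrite andbT /=; apply/hasPn => z /mapP [r _ ->]; by apply/mapP => [[r' _ []]].
Qed.

Lemma mk_perm n : perm_eq (map (@mk n) (enum {set 'I_n})) (allm n).
Proof.
apply: uniq_perm.
- rewrite map_inj_uniq ?enum_uniq // => J1 J2 e; apply/setP => i.
  have := congr1 (fun s => nth false s i) e; rewrite /mk.
  by rewrite !(nth_map i); rewrite -?enumT ?size_enum_ord ?nth_ord_enum.
- exact: allm_uniq.
move=> b; rewrite allm_mem; apply/mapP/idP => [[J _ ->]|/eqP hb].
  by rewrite /mk size_map size_enum_ord.
exists [set i : 'I_n | nth false b i]; first by rewrite mem_enum.
apply: (@eq_from_nth _ false); first by rewrite /mk size_map size_enum_ord hb.
move=> i; rewrite hb => hi.
rewrite /mk (nth_map (Ordinal hi)); last by rewrite -?enumT size_enum_ord.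
change i with (nat_of_ord (Ordinal hi)).
by rewrite -?enumT nth_ord_enum inE.
Qed.

Lemma Delta_DF (T : ptree X) : teq (DF K (Some T)) (Delta_formula K T).
Proof.
have -> : Delta_formula K T = map (hh K (Some T)) (map (@mk _) (enum {set 'I_(nleaves T)})).
  rewrite /Delta_formula -map_comp; apply: eq_map => J /=.
  rewrite /hh /leaf_restr /=; congr (_, (_, _)); rewrite /mk -map_comp.
  by congr (mono_red (restr _ _)); apply: eq_map => i /=; rewrite inE.
move=> p; rewrite /DF /coef2 /=.
by apply: perm_big; rewrite perm_map // perm_sym mk_perm.
Qed.
End Tr3.


Section Ind.
Variables (X : countType) (P : ptree X -> Prop).
Hypothesis HL : forall x, P (Leaf x).
Hypothesis HN : forall l, (forall t, t \in l -> P t) -> P (Node l).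

Lemma nomem (s : ptree X) : s \in [::] -> False.
Proof. by rewrite in_nil. Qed.
Lemma tailmem (s a : ptree X) l : s \in a :: l -> s <> a -> s \in l.
Proof. by rewrite in_cons => /orP [/eqP|]. Qed.

Fixpoint ptree_ind' (t : ptree X) : P t :=
  match t with
  | Leaf x => HL x
  | Node l => HN ((fix G (l : seq (ptree X)) : forall s, s \in l -> P s :=
      match l return forall s, s \in l -> P s with
      | [::] => fun s H => False_ind _ (nomem H)
      | a :: l' => fun s H =>
          match s =P a with
          | ReflectT e => eq_ind_r P (ptree_ind' a) e
          | ReflectF ne => G l' s (tailmem H ne)
          end
      end) l)
  end.
End Ind.

Lemma binary_reduced (X : countType) (T : ptree X) : binary T -> reduced T.
Proof.
elim/ptree_ind': T => [//|l IH] /= /andP [/eqP hs hall]; rewrite hs /=.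
by apply/allP => t ht; apply: IH ht (allP hall t ht).
Qed.

Unset Implicit Arguments.
Theorem proposition4p3p5 (K : fieldType) (hK : [pchar K] =i pred0)
    (X : countType) :
  (exists D : mono X -> tens X K, is_Delta_a D) /\
  (forall D : mono X -> tens X K, is_Delta_a D ->
     (forall T : ptree X, reduced T ->
        teq (D (Some T)) (@Delta_formula X K T)) /\
     (forall T : ptree X, binary T ->
        teq (D (Some T)) (@Delta_formula X K T))).
Proof.
split.
  exists (DF K); split.
  - by move=> p.
  - by move=> x p.
  - by move=> ms _ _; rewrite DF_graft.
move=> D [hN hL hG].
have main : forall T, reduced T -> teq (D (Some T)) (DF K (Some T)).
  move=> T; elim/ptree_ind': T => [x _|ts IH].
    by move=> p; rewrite (hL x p).
  move=> /= /andP [hs hall].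
  have hg : graft (map Some ts) = Some (Node ts).
    have pm : pmap id (map Some ts) = ts by elim: ts {IH hs hall} => //= ? ? ->.
    by rewrite graftE pm; case: ts hs {IH hall pm} => [|a [|b l]].
  move=> p; rewrite -hg (hG _ _ _ p) ?size_map //; last by rewrite all_map.
  rewrite DF_graft; apply: tvee_compat => m /mapP [t ht ->].
  exact: IH ht (allP hall t ht).
split => T hT p.
  by rewrite (main T hT p); apply: Delta_DF.
by rewrite (main T (binary_reduced hT) p); apply: Delta_DF.
Qed.
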